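(* Let $T>0$, $0\leq t<T$, $\tau=T-t$, $r\geq 0$, $\sigma>0$, $n\in\mathbb{N}$, and let $S_t>0$ and $M_t>0$ with $M_t\geq S_t$. Put $u=e^{\sigma\sqrt{\tau/n}}$, $d=u^{-1}$, $q=\frac{u-e^{-r\tau/n}}{u-d}$ and $j_0=\frac{\log(M_t/S_t)}{\sigma\sqrt{\tau/n}}$. Let $\Lambda^{j_0}_{j,k,n}$ and $J$ be as in the context, and define the discrete (Cheuk–Vorst) price of the European lookback put with floating strike at time $t$ by \[ P^{fl}_n(t) = S_t \sum_{j\in J} (u^{j}-1)\sum_{k=0}^n \Lambda^{j_0}_{j,k,n}\, (1-q)^{k}q^{n-k}. \] Then $P^{fl}_n(t) = S_t(V_1-V_2+V_3)$, where, with $k_{\min}=n-\lfloor \frac{n+j_0}{2}\rfloor$ and $k_{\max}=k_{\max}(j)=\lfloor\frac{n-\lfloor j_0\rfloor-1+j}{2}\rfloor$, \begin{align*} V_1&=\sum_{k=k_{\min}}^{n}(u^{j_0+2k-n}-1) \binom{n}{k}(1-q)^{k}q^{n-k},\\ V_2&=\sum_{k=k_{\min}}^{n-\lfloor j_0\rfloor-1} (u^{j_0+2k-n}-1)\binom{n}{k+\lfloor j_0\rfloor+1}(1-q)^{k}q^{n-k},\\ V_3&=\sum_{j=0}^{n-\lfloor j_0\rfloor-1}(u^{j}-1) \sum_{k=j}^{k_{\max}}\Big[\binom{n}{k-j}-\binom{n}{k-j-1}\Big] (1-q)^{k}q^{n-k}. \end{align*}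
   Context: Here $S_t$ is the current price of the underlying and $M_t=\max_{t^*\leq t}S_{t^*}$ its running maximum since emission. Consider the directed graph with initial node $(0,j_0)$ in which, from each node $(m,j_m)$ with $0\leq m<n$, there are exactly two edges: an ''up'' edge to $(m+1,j_m+1)$ and a ''down'' edge to $(m+1,\max(j_m-1,0))$. $\Lambda^{j_0}_{j,k,n}$ is the number of paths from $(0,j_0)$ to $(n,j)$ with exactly $k$ up jumps, and $J$ is the set of levels $j$ such that $(n,j)$ is reachable from $(0,j_0)$. $\lfloor x\rfloor$ is the integer part; binomial coefficients $\binom{n}{i}$ are $0$ for $i<0$ or $i>n$. *)

(* Defs.v *)
From HB Require Import structures.
From mathcomp Require Import all_boot all_order all_algebra.
From mathcomp Require Import all_classical all_reals all_analysis.
Set Implicit Arguments. Unset Strict Implicit. Unset Printing Implicit Defensive.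
Import Order.TTheory GRing.Theory Num.Theory.
Local Open Scope ring_scope.

Section CV.
Variable R : realType.

Definition lb_step (x : R) (b : bool) : R :=
  if b then x + 1 else Num.max (x - 1) 0.

(* A path of length n starting at (0,j0) is identified with its sequence of
   n edge choices (each node has exactly one up and one down edge). *)
Definition lb_end (j0 : R) (s : seq bool) : R := foldl lb_step j0 s.

(* Lambda^{j0}_{j,k,n}: number of paths (0,j0) -> (n,j) with exactly k up jumps. *)
Definition Lambda (j0 j : R) (k n : nat) : nat :=
  #|[set s : n.-tuple bool | (count id s == k) && (lb_end j0 s == j)]|.

(* J: the (finite) set of levels j such that (n,j) is reachable from (0,j0),
   as a duplicate-free list. *)
Definition Jlev (j0 : R) (n : nat) : seq R :=
  undup [seq lb_end j0 (val s) | s : n.-tuple bool].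

Definition binZ (n : nat) (i : int) : nat :=
  match i with Posz m => 'C(n, m) | Negz _ => 0%N end.

Definition Pfl (S u q j0 : R) (n : nat) : R :=
  S * \sum_(j <- Jlev j0 n)
        (u `^ j - 1) * \sum_(0 <= k < n.+1)
           (Lambda j0 j k n)%:R * (1 - q) ^+ k * q ^+ (n - k).

(* floor of j0 (j0 >= 0 here, so truncn = floor) *)
Definition fl (x : R) : nat := Num.truncn x.

(* k_min = n - floor((n+j0)/2); negative values only occur when all
   corresponding terms of V1 vanish (binomial = 0) and V2 is empty,
   so k ranges over naturals from max(k_min,0). *)
Definition kmin (j0 : R) (n : nat) : nat := (n - Num.truncn ((n%:R + j0) / 2))%N.

Definition V1 (u q j0 : R) (n : nat) : R :=
  \sum_(kmin j0 n <= k < n.+1)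
     (u `^ (j0 + (2 * k)%:R - n%:R) - 1) * ('C(n, k))%:R * (1 - q) ^+ k * q ^+ (n - k).

Definition V2 (u q j0 : R) (n : nat) : R :=
  \sum_(kmin j0 n <= k < n - fl j0)
     (u `^ (j0 + (2 * k)%:R - n%:R) - 1) * ('C(n, k + fl j0 + 1))%:R
       * (1 - q) ^+ k * q ^+ (n - k).

Definition kmax (j0 : R) (n j : nat) : nat := ((n - fl j0 - 1 + j) %/ 2)%N.

Definition V3 (u q j0 : R) (n : nat) : R :=
  \sum_(0 <= j < n - fl j0)
    (u `^ j%:R - 1) * \sum_(j <= k < (kmax j0 n j).+1)
       ((binZ n (k%:Z - j%:Z))%:R - (binZ n (k%:Z - j%:Z - 1))%:R)
         * (1 - q) ^+ k * q ^+ (n - k).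

End CV.

(* Main.v *)
Require Import Defs.
From HB Require Import structures.
From mathcomp Require Import all_boot all_order all_algebra.
From mathcomp Require Import all_classical all_reals all_analysis.
From mathcomp Require Import zify ring lra.
From Stdlib Require Import Lia.
Import Order.TTheory GRing.Theory Num.Theory.

Lemma card_setE (T : finType) (P : pred T) :
  #|[set s : T | P s]| = \sum_(s : T) (P s : nat).
Proof.
rewrite cardsE -sum1_card big_mkcond /=; apply: eq_bigr => i _; rewrite unfold_in.
by case: (P i).
Qed.

Lemma card_tcons (n : nat) (P : seq bool -> bool) :
  #|[set s : n.+1.-tuple bool | P s]| =
  (#|[set s : n.-tuple bool | P (true :: s)]| + #|[set s : n.-tuple bool | P (false :: s)]|)%N.
Proof.
rewrite !card_setE.
pose h (p : bool * n.-tuple bool) : n.+1.-tuple bool := cons_tuple p.1 p.2.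
have hb : bijective h.
  exists (fun t : n.+1.-tuple bool => (thead t, behead_tuple t)).
    by case=> b s; congr pair; apply: val_inj.
  by move=> t; rewrite /h /= [RHS]tuple_eta.
rewrite (reindex h (onW_bij _ hb)) /=.
rewrite -(pair_big xpredT xpredT (fun b (s : n.-tuple bool) => (P (b :: s) : nat))) /=.
by rewrite big_bool.
Qed.

Fixpoint nm (s : seq bool) : nat :=
  match s with [::] => 0%N | b :: s' => if b then (nm s').-1 else (nm s').+1 end.

Definition cnt (n k a : nat) :=
  #|[set s : n.-tuple bool | (count id s == k) && (a <= nm s)]|.

Definition gc (n k a : nat) := if (n <= 2 * k + a)%N then 'C(n, k + a) else 'C(n, k).

Lemma cnt_eq n k a : cnt n k a = gc n k a.
Proof.
elim: n k a => [|n IH] k a.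
  rewrite /cnt card_setE.
  rewrite (eq_bigr (fun _ => ((k == 0%N) && (a == 0%N)) : nat)); last first.
    by move=> s _; rewrite (tuple0 s) /= eq_sym leqn0.
  by rewrite sum_nat_const card_tuple /= /gc; case: k => [|k]; case: a => [|a].
rewrite /cnt (@card_tcons n (fun s : seq bool => (count id s == k) && (a <= nm s))).
have Ht : #|[set s : n.-tuple bool | (count id (true :: s) == k) && (a <= nm (true :: s))]|
   = if k is k'.+1 then cnt n k' (if a == 0%N then 0%N else a.+1) else 0%N.
  case: k => [|k].
    apply/eqP; rewrite cards_eq0; apply/eqP/setP => s; rewrite !inE /=.
    by [].
  rewrite /cnt; apply: eq_card => s; rewrite !inE /= add1n eqSS.
  case: (count id s == k) => //=; case: a => [|a] /=; first by [].
  by case: (nm s) => [|m].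
have Hf : #|[set s : n.-tuple bool | (count id (false :: s) == k) && (a <= nm (false :: s))]|
   = cnt n k a.-1.
  rewrite /cnt; apply: eq_card => s; rewrite !inE /= add0n.
  by clear Ht; case: a.
rewrite Ht Hf /gc; clear Ht Hf; case: k => [|k].
  rewrite !IH /gc add0n; case: a => [|a] /=.
    by rewrite !if_same !bin0.
  rewrite !muln0 !add0n !bin0 ltnS.
  case: ifP => // Hna.
  by rewrite binS (bin_small (n := n) (m := a.+1)) ?ltnS.
rewrite !IH /gc; case: a => [|a] /=.
  rewrite !addn0 !if_same binS addnC.
  by [].
have -> : (n <= 2 * k + a.+2) = (n <= 2 * k.+1 + a) by congr leq; lia.
have -> : (n < 2 * k.+1 + a.+1) = (n <= 2 * k.+1 + a) by rewrite addnS ltnS.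
case: (leqP n (2 * k.+1 + a)) => _.
  rewrite (_ : (k + a.+2 = (k.+1 + a).+1)%N); last lia.
  rewrite (_ : (k.+1 + a.+1 = (k.+1 + a).+1)%N); last lia.
  by rewrite binS.
by rewrite binS addnC.
Qed.

Lemma nm_le (s : seq bool) : (count id s + nm s <= size s)%N.
Proof. elim: s => [|[] s IH] //=; case: (nm s) IH => [|m] /=; lia. Qed.

Lemma nm_ge (s : seq bool) : (size s <= 2 * count id s + nm s)%N.
Proof. elim: s => [|[] s IH] //=; case: (nm s) IH => [|m] /=; lia. Qed.

Local Open Scope ring_scope.

Lemma leF_lt (R : realType) (x y : R) : (x <= y) = false -> y < x.
Proof. by move/negbT; rewrite -ltNge. Qed.

Lemma lb_endE (R : realType) (s : seq bool) (j0 : R) : 0 <= j0 ->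
  lb_end j0 s = j0 + ((2 * count id s)%N%:R - (size s)%:R) - Num.min 0 (j0 - (nm s)%:R).
Proof.
elim: s j0 => [|b s IH] j0 hj0.
  rewrite /lb_end /= subrr subr0 addr0 minEle ifT ?subr0 //.
have hst : 0 <= lb_step j0 b.
  rewrite /lb_step; case: b; first lra.
  by rewrite maxEle; case: ifP => //; lra.
rewrite /lb_end /= -/(lb_end _ _) (IH _ hst) /lb_step; clear hst.
case: b => /=.
  case Hm: (nm s) => [|m] /=.
    rewrite !subr0 !minEle ifT; last lra.
    rewrite ifT //. rewrite !natrM !natrD /=. lra.
  rewrite !minEle !natrM !natrD /= -!natr1.
  have -> : j0 + 1 - (m%:R + 1) = j0 - m%:R by lra.
  by case: ifP => _; lra.
rewrite !minEle !maxEle !natrM ?natrD /= -!natr1 ?add0n.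
have hN : 0 <= (nm s)%:R :> R := ler0n _ _.
by repeat case: ifP => [?|/leF_lt ?]; lra.
Qed.

Lemma sumR_cardif (R : realType) (T : finType) (P Q : pred T) (c : R) :
  \sum_(s | P s) (if Q s then c else 0) = c * (#|[set s | P s && Q s]|)%:R.
Proof.
rewrite card_setE natr_sum mulr_sumr big_mkcond /=; apply: eq_bigr => s _.
by case: (P s); case: (Q s) => /=; rewrite ?mulr1 ?mulr0.
Qed.

Lemma sumR_card (R : realType) (T : finType) (P : pred T) (c : R) :
  \sum_(s | P s) c = c * (#|[set s | P s]|)%:R.
Proof.
rewrite card_setE natr_sum mulr_sumr big_mkcond /=; apply: eq_bigr => s _.
by case: (P s) => /=; rewrite ?mulr1 ?mulr0.
Qed.

Lemma card_split (T : finType) (P a : pred T) :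
  #|[set s | P s]| = (#|[set s | P s && a s]| + #|[set s | P s && ~~ a s]|)%N.
Proof.
rewrite !card_setE -big_split /=; apply: eq_bigr => s _.
by case: (P s); case: (a s).
Qed.

Lemma sum_uniq_j (R : realType) (N n x : nat) (F : nat -> R) :
  (n <= x)%N -> (x - n < N)%N ->
  \sum_(j < N) (if (j + n == x)%N then F j else 0) = F (x - n)%N.
Proof.
move=> h1 h2.
rewrite (bigD1 (Ordinal h2)) //= subnK // eqxx big1 ?addr0 // => j hj.
case: ifP => // /eqP hjx; exfalso; move: hj => /eqP; apply.
by apply: val_inj => /=; rewrite -hjx addnK.
Qed.

Definition fl' (R : realType) (x : R) := Num.truncn x.

Lemma stepB (R : realType) (j0 : R) (f : R -> R) (n k : nat) :
  0 <= j0 ->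
  \sum_(s : n.-tuple bool | count id s == k) f (lb_end j0 s) =
  f (j0 + (2 * k)%N%:R - n%:R) * (('C(n, k))%:R - (gc n k (fl j0).+1)%:R)
  + \sum_(j < n - fl j0) f j%:R *
     (#|[set s : n.-tuple bool | ((count id s == k) && ~~ (nm s <= fl j0)%N)
            && (j + n == 2 * k + nm s)%N]|)%:R.
Proof.
move=> hj0; set m := fl j0.
have hm : m%:R <= j0 by rewrite /m /fl truncn_le.
have hm1 : j0 < m.+1%:R by rewrite /m /fl; case/andP: (truncn_itv hj0).
rewrite (bigID (fun s : n.-tuple bool => (nm s <= m)%N)) /=.
congr (_ + _).
  rewrite (eq_bigr (fun _ => f (j0 + (2 * k)%N%:R - n%:R))); last first.
    move=> s /andP [/eqP hk hle]; rewrite lb_endE // size_tuple hk.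
    have hle' : (nm s)%:R <= j0 :> R by apply: le_trans hm; rewrite ler_nat.
    rewrite minEle ifT; last lra.
    congr f; lra.
  rewrite sumR_card; congr (_ * _).
  have := card_split _ (fun s : n.-tuple bool => count id s == k) (fun s => nm s <= m)%N.
  have -> : #|[set s : n.-tuple bool | count id s == k]| = 'C(n, k).
    rewrite -[RHS](_ : gc n k 0 = 'C(n, k)); last by rewrite /gc !addn0 if_same.
    by rewrite -cnt_eq /cnt; apply: eq_card => s; rewrite !inE andbT.
  have -> : #|[set s : n.-tuple bool | (count id s == k) && ~~ (nm s <= m)%N]| = gc n k m.+1.
    by rewrite -cnt_eq /cnt; apply: eq_card => s; rewrite !inE ltnNge.
  by move=> ->; rewrite natrD addrK.
rewrite (eq_bigr (fun s : n.-tuple bool => \sum_(j < n - m) (if (j + n == 2 * k + nm s)%N then f j%:R else 0))); last first.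
  move=> s /andP [/eqP hk hlt].
  have h1 := nm_le s; have h2 := nm_ge s.
  rewrite size_tuple hk in h1 h2.
  rewrite (@sum_uniq_j R _ _ _ (fun j => f j%:R) h2); last lia.
  rewrite lb_endE // size_tuple hk.
  have hlt' : j0 < (nm s)%:R :> R.
    apply: lt_le_trans hm1 _; rewrite ler_nat; lia.
  rewrite minEle ifF; last by apply/negbTE; rewrite -ltNge; lra.
  congr f; rewrite natrB // natrD; lra.
rewrite exchange_big /=; apply: eq_bigr => j _.
by rewrite sumR_cardif.
Qed.

Lemma card_kj (R : realType) n m k j :
  ((#|[set s : n.-tuple bool | ((count id s == k) && ~~ (nm s <= m)%N)
            && (j + n == 2 * k + nm s)%N]|)%:R : R)
  = if (m < n + j - 2 * k)%N && (2 * k <= n + j)%N then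
      (gc n k (n + j - 2 * k))%:R - (gc n k (n + j - 2 * k).+1)%:R else 0.
Proof.
case: ifP => [/andP [h1 h2] | hc].
  set b := (n + j - 2 * k)%N.
  have := card_split _ (fun s : n.-tuple bool => (count id s == k) && (b <= nm s)%N)
              (fun s => b.+1 <= nm s)%N.
  rewrite -/(cnt n k b) cnt_eq.
  have -> : #|[set s : n.-tuple bool | (count id s == k) && (b <= nm s)%N && (b.+1 <= nm s)%N]|
     = gc n k b.+1.
    rewrite -cnt_eq /cnt; apply: eq_card => s; rewrite !inE -andbA; congr andb.
    by apply/idP/idP => [/andP [] //| h]; rewrite h andbT ltnW.
  move=> ->; rewrite natrD addrC addKr; congr _%:R; apply: eq_card => s; rewrite !inE.
  case: (count id s == k) => //=.
  rewrite /b; move: (nm s) => x; clear b.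
  apply/idP/idP.
    by case/andP => h3 /eqP h4; apply/andP; split; lia.
  by case/andP => h3 h4; apply/andP; split; [lia | apply/eqP; lia].
apply/eqP; rewrite pnatr_eq0 cards_eq0; apply/eqP/setP => s; rewrite !inE.
apply/negbTE; apply/negP => /andP [/andP [_ h1] /eqP h2].
move: hc; move: (nm s) h1 h2 => x h1 h2.
have -> : (m < n + j - 2 * k)%N by lia.
by have -> : (2 * k <= n + j)%N by lia.
Qed.

Lemma binZ_sub1 n k j : binZ n (k%:Z - j%:Z) = if (j <= k)%N then 'C(n, k - j) else 0%N.
Proof.
case: leqP => h; first by rewrite subzn.
have : (k%:Z - j%:Z < 0)%R by lia.
by case: (k%:Z - j%:Z).
Qed.

Lemma binZ_sub2 n k j : binZ n (k%:Z - j%:Z - 1) = if (j < k)%N then 'C(n, k - j.+1) else 0%N.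
Proof.
case: ltnP => h.
  have -> : (k%:Z - j%:Z - 1 = (k - j.+1)%N%:Z)%R by lia.
  by [].
have : (k%:Z - j%:Z - 1 < 0)%R by lia.
by case: (k%:Z - j%:Z - 1).
Qed.

Lemma coef3 (R : realType) n m k j : (j < n - m)%N -> (k <= n)%N ->
 (if (m < n + j - 2 * k)%N && (2 * k <= n + j)%N then
    (gc n k (n + j - 2 * k))%:R - (gc n k (n + j - 2 * k).+1)%:R else 0 : R)
 = if (j <= k)%N && (k < ((n - m - 1 + j) %/ 2).+1)%N then
    (binZ n (k%:Z - j%:Z))%:R - (binZ n (k%:Z - j%:Z - 1))%:R else 0.
Proof.
move=> hj hk; rewrite ltnS leq_divRL // binZ_sub1 binZ_sub2.
case: (boolP ((m < n + j - 2 * k)%N && (2 * k <= n + j)%N)) => H; last first.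
  rewrite ifF //; apply/negbTE; apply/negP => /andP [h1 h2]; move/negP: H; apply.
  apply/andP; split; lia.
rewrite /gc.
have -> : (n <= 2 * k + (n + j - 2 * k))%N by lia.
have -> : (n <= 2 * k + (n + j - 2 * k).+1)%N by lia.
case: (leqP j k) => hjk /=.
  rewrite ifT; last lia.
  rewrite (_ : (k + (n + j - 2 * k) = n - (k - j))%N); last lia.
  rewrite bin_sub; last lia.
  case: (ltnP j k) => hjk2.
    rewrite (_ : (k + (n + j - 2 * k).+1 = n - (k - j.+1))%N); last lia.
    by rewrite bin_sub; last lia.
  rewrite (@bin_small n (k + (n + j - 2 * k).+1)%N); last lia.
  by [].
rewrite !bin_small; [by rewrite subrr | lia | lia].
Qed.

Lemma sum_seq_pick (R : realType) (r : seq R) (x : R) (F : R -> R) :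
  x \in r -> uniq r -> \sum_(j <- r) (if x == j then F j else 0) = F x.
Proof.
move=> hx hu; rewrite (bigD1_seq x) //= eqxx big1_seq ?addr0 // => j /andP [hj _].
by rewrite eq_sym (negbTE hj).
Qed.

Lemma sum_ord_pick (R : realType) (N x : nat) (F : nat -> R) :
  (x < N)%N -> \sum_(k < N) (if x == k then F k else 0) = F x.
Proof.
move=> hx; rewrite -big_mkcond /=.
rewrite (eq_bigl (fun k : 'I_N => (k == x :> nat))); last by move=> k; rewrite eq_sym.
by rewrite big_ord1_eq hx.
Qed.

Lemma stepA (R : realType) (j0 : R) (f : R -> R) (w : nat -> R) (n : nat) :
  \sum_(j <- Jlev j0 n) f j * \sum_(0 <= k < n.+1) (Lambda j0 j k n)%:R * w k
  = \sum_(k < n.+1) w k * \sum_(s : n.-tuple bool | count id s == k) f (lb_end j0 s).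
Proof.
have E : forall G : R -> nat -> R, forall s : n.-tuple bool,
   \sum_(k < n.+1) (if count id s == k then G (lb_end j0 s) k else 0) = G (lb_end j0 s) (count id s).
  move=> G s; apply: (@sum_ord_pick R n.+1 (count id s) (fun k => G (lb_end j0 s) k)).
  by rewrite ltnS -[X in (_ <= X)%N](size_tuple s) count_size.
transitivity (\sum_(s : n.-tuple bool) f (lb_end j0 s) * w (count id s)); last first.
  under eq_bigr => s _ do rewrite -(E (fun y k => f y * w k) s).
  rewrite exchange_big /=; apply: eq_bigr => k _.
  rewrite mulr_sumr [RHS]big_mkcond /=; apply: eq_bigr => s _.
  by case: (count id s == k); rewrite ?mulr0 // mulrC.
under eq_bigr => j _.
  rewrite big_mkord.
  under eq_bigr => k _ do rewrite /Lambda card_setE natr_sum mulr_suml.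
  rewrite exchange_big mulr_sumr /=.
  under eq_bigr => s _.
    rewrite mulr_sumr (eq_bigr (fun i : 'I_n.+1 => if count id s == i then (fun y k => if y == j then f j * w k else 0) (lb_end j0 s) i else 0)); last first.
      move=> i _; case: (count id s == i); case: (lb_end j0 s == j) => /=.
      - by rewrite mul1r.
      - by rewrite mul0r mulr0.
      - by rewrite mul0r mulr0.
      - by rewrite mul0r mulr0.
    rewrite (E (fun y k => if y == j then f j * w k else 0)) /=.
    over.
  over.
rewrite /= exchange_big /=; apply: eq_bigr => s _.
rewrite (@sum_seq_pick R _ _ (fun j => f j * w (count id s))) //.
  by rewrite mem_undup; apply: map_f; rewrite mem_enum.
by rewrite undup_uniq.
Qed.

Lemma kmin_le (R : realType) (j0 : R) n k : 0 <= j0 -> (k <= n)%N ->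
  (kmin j0 n <= k)%N = (n <= 2 * k + fl j0)%N.
Proof.
move=> hj0 hk; rewrite /kmin leq_subLR.
set F := Num.truncn _.
have hx : 0 <= (n%:R + j0) / 2 :> R by apply: divr_ge0 => //; apply: addr_ge0.
have /andP [hF1 hF2] := truncn_itv hx.
have /andP [hm1 hm2] := truncn_itv hj0.
rewrite -/F in hF1 hF2; rewrite /fl; set m := Num.truncn j0 in hm1 hm2 *.
apply/idP/idP => H.
  have h1 : (n - k <= F)%N by lia.
  have h2 : ((n - k)%N%:R <= (n%:R + j0) / 2 :> R) by apply: le_trans hF1; rewrite ler_nat.
  have h3 : ((2 * (n - k))%N%:R < (n + m.+1)%N%:R :> R).
    rewrite natrM natrD; move: h2 hm2; rewrite natrB //; lra.
  rewrite ltr_nat in h3; lia.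
suff : (n - k <= F)%N by lia.
rewrite /F truncn_ge_nat //.
have h3 : ((2 * (n - k))%N%:R <= (n + m)%N%:R :> R) by rewrite ler_nat; lia.
move: h3 hm1; rewrite natrM natrD natrB //; lra.
Qed.

Lemma coef1 (R : realType) n m k : (k <= n)%N ->
  ('C(n, k))%:R - (gc n k m.+1)%:R =
  (if (n <= 2 * k + m)%N then ('C(n, k))%:R else 0 : R)
  - (if (n <= 2 * k + m)%N && (k < n - m)%N then ('C(n, k + m.+1))%:R else 0).
Proof.
move=> hk; rewrite /gc.
case: (leqP n (2 * k + m)) => h1 /=.
  rewrite ifT; last lia.
  case: ltnP => h2 //.
  by rewrite (@bin_small n (k + m.+1)) ?subr0 //; lia.
rewrite subrr; case: (leqP n (2 * k + m.+1)) => h2.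
  have -> : (k + m.+1 = n - k)%N by lia.
  by rewrite bin_sub // subrr.
by rewrite subrr.
Qed.

Lemma main_ident (R : realType) (S u q j0 : R) (n : nat) : 0 <= j0 ->
  Pfl S u q j0 n = S * (V1 u q j0 n - V2 u q j0 n + V3 u q j0 n).
Proof.
move=> hj0.
pose f := fun x : R => u `^ x - 1.
pose w := fun k : nat => (1 - q) ^+ k * q ^+ (n - k).
pose m := fl j0.
pose X := fun k : nat => j0 + (2 * k)%N%:R - n%:R.
pose c1a := fun k : nat => (if (n <= 2 * k + m)%N then ('C(n, k))%:R else 0 : R).
pose c1b := fun k : nat => (if (n <= 2 * k + m)%N && (k < n - m)%N then ('C(n, k + m.+1))%:R else 0 : R).
pose c3 := fun k j : nat => if (j <= k)%N && (k < ((n - m - 1 + j) %/ 2).+1)%N then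
    (binZ n (k%:Z - j%:Z))%:R - (binZ n (k%:Z - j%:Z - 1))%:R else 0 : R.
have HL : \sum_(j <- Jlev j0 n) (u `^ j - 1) * \sum_(0 <= k < n.+1)
           (Lambda j0 j k n)%:R * (1 - q) ^+ k * q ^+ (n - k)
   = \sum_(k < n.+1) w k * (f (X k) * (c1a k - c1b k) + \sum_(j < n - m) f j%:R * c3 k j).
  rewrite (eq_bigr (fun j => f j * \sum_(0 <= k < n.+1) (Lambda j0 j k n)%:R * w k)); last first.
    by move=> j _; congr (_ * _); apply: eq_bigr => k _; rewrite mulrA.
  rewrite stepA; apply: eq_bigr => [[k hk]] _ /=; congr (_ * _).
  rewrite stepB //; congr (_ + _).
    by rewrite coef1.
  apply: eq_bigr => [[j hj]] _ /=; congr (_ * _).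
  by rewrite card_kj coef3.
have H1 : V1 u q j0 n = \sum_(k < n.+1) f (X k) * c1a k * w k.
  rewrite /V1 big_geq_mkord /= big_mkcond /=; apply: eq_bigr => [[k hk]] _ /=.
  rewrite kmin_le // -/m /c1a; case: ifP => _; last by rewrite mulr0 mul0r.
  by rewrite [RHS]mulrA.
have H2 : V2 u q j0 n = \sum_(k < n.+1) f (X k) * c1b k * w k.
  rewrite /V2 (@big_nat_widen _ _ _ _ _ n.+1); last lia.
  rewrite big_geq_mkord /=.
  rewrite big_mkcond /=; apply: eq_bigr => [[k hk]] _ /=.
  rewrite kmin_le // -/m /c1b (andbC (k < n - m)%N); case: ifP => _; last by rewrite mulr0 mul0r.
  by rewrite addn1 addnS [RHS]mulrA.
have H3 : V3 u q j0 n = \sum_(k < n.+1) \sum_(j < n - m) f j%:R * c3 k j * w k.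
  rewrite /V3 big_mkord [RHS]exchange_big /=; apply: eq_bigr => [[j hj]] _ /=.
  rewrite mulr_sumr (@big_nat_widen _ _ _ _ _ n.+1); last first.
    rewrite ltnS /kmax; lia.
  rewrite big_geq_mkord /= big_mkcond /=; apply: eq_bigr => [[k hk]] _ /=.
  rewrite /kmax -/m /c3 (andbC (k < _)%N); case: ifP => _; last by rewrite mulr0 mul0r.
  by rewrite /f /w !mulrA.
rewrite /Pfl HL H1 H2 H3; congr (S * _).
rewrite -sumrB -big_split /=; apply: eq_bigr => k _.
rewrite mulrDr mulr_sumr; congr (_ + _).
  by rewrite /=; ring.
by apply: eq_bigr => j _; ring.
Qed.

Theorem theorem2p3 (R : realType) (T t r sigma S M : R) (n : nat)
  (hT : 0 < T) (ht0 : 0 <= t) (htT : t < T) (hr : 0 <= r) (hsigma : 0 < sigma)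
  (hn : (0 < n)%N) (hS : 0 < S) (hM : 0 < M) (hMS : S <= M) :
  let tau := T - t in
  let u := expR (sigma * Num.sqrt (tau / n%:R)) in
  let d := u^-1 in
  let q := (u - expR (- r * tau / n%:R)) / (u - d) in
  let j0 := ln (M / S) / (sigma * Num.sqrt (tau / n%:R)) in
  Pfl S u q j0 n = S * (V1 u q j0 n - V2 u q j0 n + V3 u q j0 n).
Proof.
move=> tau u d q j0; apply: main_ident.
rewrite /j0; apply: divr_ge0.
  apply: ln_ge0; rewrite ler_pdivlMr // mul1r //.
by apply: mulr_ge0; [lra | apply: sqrtr_ge0].
Qed.
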